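(* Let $(X,\mathscr{R})$ be a closed mixed reaction network with $\mathscr{R}=\mathscr{R}_{\mathrm{rev}}\sqcup\mathscr{R}_{\mathrm{irr}}$. Then $(X,\mathscr{R})$ is strictly thermodynamically sound if and only if no futile cycle contains an irreversible reaction. Here a futile cycle $v$ contains an irreversible reaction if $v_r>0$ for some $r\in\mathscr{R}_{\mathrm{irr}}$.
   Context: A reaction network (RN) $(X,\mathscr{R})$ consists of a finite non-empty set $X$ of species and a finite non-empty set $\mathscr{R}$ of reactions. Each reaction $r$ is given by stoichiometric coefficients $s^-_{xr},s^+_{xr}\in\mathbb{N}_0$. The stoichiometric matrix $S\in\mathbb{Z}^{X\times\mathscr{R}}$ has entries $S_{xr}=s^+_{xr}-s^-_{xr}$. A reaction $r$ is proper if there are $x,y$ with $S_{xr}<0<S_{yr}$, and the RN is closed if all reactions are proper. The reverse $\bar r$ of $r$ has $s^-_{x\bar r}=s^+_{xr}$ and $s^+_{x\bar r}=s^-_{xr}$. A mixed RN has $\mathscr{R}=\mathscr{R}_{\mathrm{rev}}\sqcup\mathscr{R}_{\mathrm{irr}}$, where $r\in\mathscr{R}_{\mathrm{rev}}$ implies $\bar r\in\mathscr{R}_{\mathrm{rev}}$, and $r\in\mathscr{R}_{\mathrm{irr}}$ implies $\bar r\notin\mathscr{R}$. For $v\in\mathbb{R}^{\mathscr{R}}$, $v>0$ means $v$ is componentwise non-negative and nonzero. A futile cycle is a vector $v>0$ with $Sv=0$. For $g\in\mathbb{R}^{\mathscr{R}}$ (reaction energies), $(X,\mathscr{R},g)$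 is thermodynamic if $g\in(\ker S)^\perp$. The mixed RN is strictly thermodynamically sound if, for every $\gamma>1$, there is $g$ with all of the following: - $(X,\mathscr{R},g)$ is thermodynamic; - $|g_r|\le1$ for all $r\in\mathscr{R}_{\mathrm{rev}}$; - $g_r\le-\gamma$ for all $r\in\mathscr{R}_{\mathrm{irr}}$. *)

(* Defs.v *)
From HB Require Import structures.
From mathcomp Require Import all_boot all_order all_algebra.
From mathcomp Require Import reals.
Set Implicit Arguments. Unset Strict Implicit. Unset Printing Implicit Defensive.
Import Order.TTheory GRing.Theory Num.Theory.
Local Open Scope ring_scope.

(* A reaction network: species type X and reaction type Rc (finite types),
   with stoichiometric coefficients sm (reactant, s^-) and sp (product, s^+),
   indexed as sm r x = s^-_{xr}. *)
Section RN.
Variables (R : realType) (X Rc : finType) (sm sp : Rc -> X -> nat).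

Definition stoich (x : X) (r : Rc) : R := (sp r x)%:R - (sm r x)%:R.

Definition reactions_distinct : Prop :=
  forall r r' : Rc, (forall x, sm r x = sm r' x) -> (forall x, sp r x = sp r' x) -> r = r'.

Definition proper (r : Rc) : Prop :=
  exists x y, stoich x r < 0 /\ 0 < stoich y r.

Definition closed_RN : Prop := forall r, proper r.

Definition is_reverse (r' r : Rc) : Prop :=
  (forall x, sm r' x = sp r x) /\ (forall x, sp r' x = sm r x).

(* mixed RN: irr is the predicate of irreversible reactions, its complement R_rev *)
Definition mixed_RN (irr : pred Rc) : Prop :=
  (forall r, ~~ irr r -> exists r', ~~ irr r' /\ is_reverse r' r) /\
  (forall r, irr r -> forall r', ~ is_reverse r' r).

Definition S_mul (v : Rc -> R) (x : X) : R := \sum_(r : Rc) stoich x r * v r.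

Definition in_kerS (v : Rc -> R) : Prop := forall x, S_mul v x = 0.

(* v > 0 : componentwise nonnegative and nonzero *)
Definition vpos (v : Rc -> R) : Prop := (forall r, 0 <= v r) /\ exists r, v r != 0.

Definition futile_cycle (v : Rc -> R) : Prop := vpos v /\ in_kerS v.

Definition thermodynamic (g : Rc -> R) : Prop :=
  forall v, in_kerS v -> \sum_(r : Rc) g r * v r = 0.

Definition strictly_thermo_sound (irr : pred Rc) : Prop :=
  forall gamma : R, 1 < gamma ->
    exists g : Rc -> R, thermodynamic g /\
      (forall r, ~~ irr r -> `|g r| <= 1) /\
      (forall r, irr r -> g r <= - gamma).

End RN.

(* Main.v *)
Require Import Defs.
From HB Require Import structures.
From mathcomp Require Import all_boot all_order all_algebra.
From mathcomp Require Import reals.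
From mathcomp Require Import ring lra.
Import Order.TTheory GRing.Theory Num.Theory.
Local Open Scope ring_scope.

Definition dot (R : realType) (X : finType) (u v : X -> R) : R := \sum_x u x * v x.
Arguments dot {R X}.

Lemma dot_linl (R : realType) (X : finType) (a b : R) (u v w : X -> R) :
  dot (fun x => a * u x + b * v x) w = a * dot u w + b * dot v w.
Proof.
rewrite /dot !mulr_sumr -big_split; apply: eq_bigr => x _ /=; ring.
Qed.

Lemma dot_linr (R : realType) (X : finType) (a b : R) (u v w : X -> R) :
  dot w (fun x => a * u x + b * v x) = a * dot w u + b * dot w v.
Proof.
rewrite /dot !mulr_sumr -big_split; apply: eq_bigr => x _ /=; ring.
Qed.

Lemma farkas (R : realType) (X I : finType) (n : nat) :
  forall (P : {set I}) (c : I -> X -> R) (b : X -> R), #|P| = n ->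
  (exists l : I -> R, (forall r, 0 <= l r) /\ (forall r, r \notin P -> l r = 0) /\
      (forall x, b x = \sum_r l r * c r x))
  \/ (exists mu : X -> R, (forall r, r \in P -> dot mu (c r) <= 0) /\ 0 < dot mu b).
Proof.
elim: n => [|n IH] P c b HP.
  have P0 : P = set0 by apply/cards0_eq.
  case: (boolP [forall x, b x == 0]) => [/forallP Hb|Hb].
    left; exists (fun _ => 0); split=> // ; split=> // x.
    by rewrite big1 ?(eqP (Hb x)) // => r _; rewrite mul0r.
  right; exists b; split=> [r|]; first by rewrite P0 inE.
  move: Hb; rewrite negb_forall => /existsP [x0 Hx0].
  rewrite lt_def; apply/andP; split; last by apply: sumr_ge0 => x _; rewrite -expr2 sqr_ge0.
  rewrite /dot psumr_eq0; last by move=> x _; rewrite -expr2 sqr_ge0.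
  apply/allP => /(_ x0 (mem_index_enum _)) /=.
  by rewrite mulf_eq0 orbb (negbTE Hx0).
have /card_gt0P [k kP] : (0 < #|P|)%N by rewrite HP.
set P' := P :\ k.
have HP' : #|P'| = n by move: HP; rewrite (cardsD1 k) kP add1n => -[].
have kP' : k \notin P' by rewrite !inE eqxx.
have inP r : r \in P -> r = k \/ r \in P'.
  by move=> rP; case: (eqVneq r k) => [->|rk]; [left|right; rewrite !inE rk].
case: (IH P' c b HP') => [[l [l0 [lP lb]]]|[mu [muP mub]]].
  left; exists l; split=> //; split=> // r rP; apply: lP.
  by rewrite !inE negb_and rP orbT.
case: (lerP (dot mu (c k)) 0) => [muk|al0].
  right; exists mu; split=> // r /inP [->|] //; exact: muP.
set al := dot mu (c k) in al0.
have aln : al != 0 by rewrite gt_eqF.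
set c' := fun r x => al * c r x + (- dot mu (c r)) * c k x.
set b' := fun x => al * b x + (- dot mu b) * c k x.
case: (IH P' c' b' HP') => [[l [l0 [lP lb]]]|[nu [nuP nub]]].
  left.
  set s := \sum_r l r * dot mu (c r).
  have s0 : s <= 0.
    apply: sumr_le0 => r _; case: (boolP (r \in P')) => rP.
      by apply: mulr_ge0_le0; [exact: l0|exact: muP].
    by rewrite lP // mul0r.
  set tau := (dot mu b - s) / al.
  have lk : l k = 0 by apply: lP.
  exists (fun r => if r == k then tau else l r); split.
    move=> r; case: ifP => _ //; apply: divr_ge0; last exact: ltW.
    by rewrite subr_ge0 (le_trans s0) // ltW.
  split.
    move=> r rP; have rk : r != k by apply: contraNneq rP => ->.
    by rewrite (negbTE rk) lP // !inE negb_and rP orbT.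
  move=> x.
  rewrite (bigD1 k) //= eqxx.
  have -> : \sum_(i | i != k) (if i == k then tau else l i) * c i x =
            \sum_i l i * c i x.
    rewrite [RHS](bigD1 k) //= lk mul0r add0r.
    by apply: eq_bigr => i /negbTE ->.
  have e := lb x.
  rewrite /b' /c' in e.
  have E2 : \sum_i l i * (al * c i x + - dot mu (c i) * c k x)
          = al * (\sum_i l i * c i x) - s * c k x.
    rewrite /s mulr_sumr mulr_suml -sumrB; apply: eq_bigr => i _; ring.
  rewrite E2 in e; move: e.
  rewrite /tau => e.
  have -> : b x = al^-1 * (al * b x) by field.
  have -> : al * b x = al * \sum_i l i * c i x - s * c k x + dot mu b * c k x.
    by rewrite -e; ring.
  by field.
right.
set t := dot nu (c k) / al.
exists (fun x => 1 * nu x + (- t) * mu x).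
have key w : dot (fun x => 1 * nu x + (- t) * mu x) w = dot nu w - t * dot mu w.
  by rewrite dot_linl; ring.
split.
  move=> r /inP [->|rP].
    rewrite key /t; have -> : dot nu (c k) / al * al = dot nu (c k) by field.
    by rewrite subrr.
  have := nuP r rP; rewrite /c' dot_linr => h.
  rewrite key.
  have -> : dot nu (c r) - t * dot mu (c r) =
     (al * dot nu (c r) + - dot mu (c r) * dot nu (c k)) / al by rewrite /t; field.
  by apply: mulr_le0_ge0 => //; rewrite invr_ge0 ltW.
move: nub; rewrite /b' dot_linr => h.
rewrite key.
have -> : dot nu b - t * dot mu b =
   (al * dot nu b + - dot mu b * dot nu (c k)) / al by rewrite /t; field.
by apply: divr_gt0.
Qed.

Theorem theorem3 (R : realType) (X Rc : finType) (sm sp : Rc -> X -> nat)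
  (irr : pred Rc)
  (hX : (0 < #|X|)%N) (hRc : (0 < #|Rc|)%N)
  (hdist : reactions_distinct sm sp)
  (hclosed : closed_RN R sm sp)
  (hmixed : mixed_RN sm sp irr) :
  strictly_thermo_sound R sm sp irr <->
  ~ (exists v : Rc -> R, futile_cycle sm sp v /\ exists r, irr r /\ 0 < v r).
Proof.
split.
  move=> Hs [v [[[v0 _] Hk] [r0 [ir0 vr0]]]].
  set T := \sum_r v r.
  set B := \sum_(r | r != r0) v r.
  have TE : T = v r0 + B by rewrite /T (bigD1 r0).
  have B0 : 0 <= B by apply: sumr_ge0.
  set gam := T / v r0 + 1.
  have vn : v r0 != 0 by rewrite gt_eqF.
  have gv : gam * v r0 = T + v r0 by rewrite /gam; field.
  have g1 : 1 < gam.
    rewrite /gam -subr_gt0 addrK divr_gt0 //; lra.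
  have [g [Ht [Hrev Hirr]]] := Hs gam g1.
  have H0 := Ht v Hk.
  rewrite (bigD1 r0) //= in H0.
  set A := \sum_(r | r != r0) g r * v r in H0.
  have AB : A <= B.
    apply: ler_sum => r _.
    have gr1 : g r <= 1.
      case: (boolP (irr r)) => ir.
        by apply: (le_trans (Hirr r ir)); lra.
      exact: le_trans (ler_norm _) (Hrev r ir).
    by rewrite -[X in _ <= X]mul1r ler_wpM2r.
  have gv0 : g r0 * v r0 <= - gam * v r0.
    by apply: ler_wpM2r; [exact: v0 | exact: Hirr].
  lra.
move=> Hno gam gam1.
set S := fun r x => stoich R sm sp x r.
have Hmu : forall i, exists mu : X -> R,
    (forall r, dot mu (S r) <= 0) /\ (irr i -> dot mu (S i) < 0).
  move=> i; case: (boolP (irr i)) => ii; last first.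
    exists (fun _ => 0); split=> // r.
    by rewrite /dot big1 // => x _; rewrite mul0r.
  case: (@farkas R X Rc _ [set: Rc] S (fun x => - S i x) erefl) =>
      [[l [l0 [_ lb]]]|[mu [muP mub]]].
    exfalso; apply: Hno; exists (fun r => l r + (r == i)%:R); split; last first.
      exists i; split=> //; rewrite eqxx; apply: ltr_wpDl => //; exact: ltr01.
    split.
      split; first by move=> r; apply: addr_ge0.
      exists i; rewrite eqxx gt_eqF //; apply: ltr_wpDl => //; exact: ltr01.
    move=> x; rewrite /S_mul.
    have -> : \sum_r stoich R sm sp x r * (l r + (r == i)%:R) =
        \sum_r l r * S r x + \sum_r stoich R sm sp x r * (r == i)%:R.
      by rewrite -big_split; apply: eq_bigr => r _ /=; rewrite /S; ring.
    rewrite -lb (bigD1 i) //= eqxx mulr1 big1 ?addr0 /S ?addNr // => r /negbTE ->.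
    by rewrite mulr0.
  exists mu; split=> [r|_]; first by apply: muP; rewrite inE.
  move: mub; rewrite /dot; under eq_bigr do rewrite mulrN.
  by rewrite sumrN oppr_gt0.
have [muf Hmuf] := fin_all_exists Hmu.
set M := fun x => \sum_i muf i x.
set d := fun r => dot M (S r).
have dE r : d r = \sum_i dot (muf i) (S r).
  rewrite /d /dot; under eq_bigr do rewrite mulr_suml; exact: exchange_big.
have dle r : d r <= 0 by rewrite dE; apply: sumr_le0 => i _; exact: (Hmuf i).1.
have dlt r : irr r -> d r < 0.
  move=> ir; rewrite dE (bigD1 r) //=.
  have a := (Hmuf r).2 ir.
  have b : \sum_(i | i != r) dot (muf i) (S r) <= 0.
    by apply: sumr_le0 => i _; exact: (Hmuf i).1.
  lra.
have drev r : ~~ irr r -> d r = 0.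
  move=> ir; have [r' [ir' [H1 H2]]] := hmixed.1 r ir.
  have e : d r' = - d r.
    rewrite /d /dot -sumrN; apply: eq_bigr => x _.
    by rewrite /S /stoich H1 H2; ring.
  have := dle r'; have := dle r; lra.
set Si := \sum_(s | irr s) (- d s)^-1.
set t := gam * Si.
exists (fun r => t * d r); split.
  move=> v Hv.
  have E : \sum_r d r * v r = 0.
    rewrite /d /dot; under eq_bigr do rewrite mulr_suml.
    rewrite exchange_big /=; apply: big1 => x _.
    transitivity (M x * S_mul sm sp v x); last by rewrite Hv mulr0.
    rewrite /S_mul mulr_sumr.
    by apply: eq_bigr => r _; rewrite /S; ring.
  transitivity (t * \sum_r d r * v r); last by rewrite E mulr0.
  rewrite mulr_sumr; apply: eq_bigr => r _; ring.
split.
  by move=> r ir; rewrite /= drev // mulr0 normr0 ler01.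
move=> r ir.
have dr := dlt r ir.
have dn : - d r != 0 by rewrite oppr_eq0 lt_eqF.
have h1 : 1 <= Si * (- d r).
  rewrite -(mulVf dn); apply: ler_wpM2r; first by rewrite oppr_ge0 dle.
  rewrite /Si (bigD1 r) //= lerDl; apply: sumr_ge0 => s /andP [irs _].
  by rewrite invr_ge0 oppr_ge0 ltW // dlt.
have -> : t * d r = - (gam * (Si * - d r)) by rewrite /t; ring.
rewrite lerN2; apply: ler_peMr; [lra | exact: h1].
Qed.
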